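(* Let $(X,d_X,\mu)$ be a compact metric measure space and let $\iota:X\to Z$ be an isometry onto its image $X':=\iota(X)\subset Z$ in a metric space $(Z,d_Z)$. Let $D^{X'}$ be the distance kernel operator of $(X',d_Z,\iota_\#\mu)$. Then there is a bijection $\iota^*:L^2(X,\mu)\to L^2(X',\iota_\#\mu)$ such that $D^{X'}\circ\iota^*=\iota^*\circ D^X$. In particular, $\phi$ is an eigenfunction of $D^X$ with eigenvalue $\lambda$ if and only if $\iota^*\phi$ is an eigenfunction of $D^{X'}$ with eigenvalue $\lambda$, and, denoting by $\Phi_k:X\to\mathbb{C}^k$ and $\Phi'_k:X'\to\mathbb{C}^k$ the distance kernel embeddings of $X$ and $X'$, we have $\Phi_k(X)=\Phi'_k(X')$.
   Context: For a compact metric measure space $(X,d,\mu)$, the distance kernel operator is $(D^Xf)(x)=\int_X f(y)d(x,y)\,d\mu(y)$ on $L^2(X,\mu)$. Its eigenvalues $\lambda_i$ are real and ordered by decreasing absolute value (assumed non-zero with distinct absolute values among the top $k$), with $L^2$-orthonormal real eigenfunctions $\phi_i$ whose signs are fixed by $\langle\phi_i,|\phi_i|\rangle>0$. With $\alpha_i=\sqrt{\lambda_i}\phi_i$ (square root with positive imaginary part if $\lambda_i<0$), the distance kernel embedding is $\Phi_k(x)=(\alpha_1(x),\dots,\alpha_k(x))$. $\iota_\#\mu$ denotes the pushforward measure. *)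

(* Defs.v *)
From HB Require Import structures.
From mathcomp Require Import all_boot all_order all_algebra.
From mathcomp Require Import all_classical all_reals all_analysis.
From mathcomp Require complex.

Set Implicit Arguments.
Unset Strict Implicit.
Unset Printing Implicit Defensive.
Import Order.TTheory GRing.Theory Num.Theory.
Local Open Scope classical_set_scope.
Local Open Scope ring_scope.

Section Metric.
Context {R : realType} {T : Type}.
Variable d : T -> T -> R.

Definition is_metric : Prop :=
  [/\ forall x y, 0 <= d x y,
      forall x y, d x y = 0 <-> x = y,
      forall x y, d x y = d y x &
      forall x y z, d x z <= d x y + d y z].

Definition dopen : set (set T) :=
  [set A | forall x, A x -> exists2 e : R, 0 < e & [set y | d x y < e] `<=` A].

Definition dcompact : Prop :=
  forall (F : set (set T)), F `<=` dopen -> setT `<=` \bigcup_(A in F) A ->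
    exists s : seq (set T), (forall A, A \in s -> F A) /\
                            setT `<=` \bigcup_(A in [set` s]) A.
End Metric.

Definition borelT {R : realType} {T : pointedType} (d : T -> T -> R) :=
  g_sigma_algebraType (dopen d).

Definition bdist {R : realType} {T : pointedType} (d : T -> T -> R) :
  borelT d -> borelT d -> R := d.
Arguments bdist {R T} d _ _.

Definition imgT {X : pointedType} {Z : choiceType} (iota : X -> Z) :=
  {z : Z | `[< exists x, iota x = z >]}.

Section imgT_inst.
Context {X : pointedType} {Z : choiceType} (iota : X -> Z).
Lemma imgT_point_subproof : `[< exists x, iota x = iota point >].
Proof. by apply/asboolP; exists point. Qed.
HB.instance Definition _ := Choice.on (imgT iota).
HB.instance Definition _ :=
  isPointed.Build (imgT iota) (exist _ (iota point) imgT_point_subproof).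
End imgT_inst.

Lemma imgT_in_subproof {X : pointedType} {Z : choiceType} (iota : X -> Z) x :
  `[< exists y, iota y = iota x >].
Proof. by apply/asboolP; exists x. Qed.
Definition corestr {X : pointedType} {Z : choiceType} (iota : X -> Z)
  (x : X) : imgT iota := exist _ (iota x) (imgT_in_subproof iota x).

Definition subdist {R : realType} {X : pointedType} {Z : choiceType}
  (iota : X -> Z) (dZ : Z -> Z -> R) (u v : imgT iota) : R :=
  dZ (val u) (val v).
Arguments subdist {R X Z} iota dZ u v.
Arguments corestr {X Z} iota x.

Section DistanceKernel.
Context {R : realType} {dd : measure_display} {T : measurableType dd}.
Variables (dist : T -> T -> R) (mu : {measure set T -> \bar R}).

Definition distker (f : T -> R) (x : T) : R :=
  Rintegral mu setT (fun y => f y * dist x y).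

Definition inner2 (f g : T -> R) : R := Rintegral mu setT (fun y => f y * g y).

Definition is_eigenfun (f : T -> R) (l : R) : Prop :=
  [/\ f \in Lfun mu 2%:E,
      ~ (f = cst 0 %[ae mu]) &
      distker f = (fun x => l * f x) %[ae mu]].

(* (l, phi) are the top k eigenpairs of D, as in the paper's convention:
   orthonormal real eigenfunctions (taken as the representatives satisfying
   the eigen-equation at every point), non-zero eigenvalues ordered by
   strictly decreasing absolute value, each l i maximal in absolute value
   among eigenvalues of eigenfunctions orthogonal to the previous ones, and
   signs fixed by <phi_i, |phi_i|> > 0. *)
Definition DK_data (k : nat) (l : 'I_k -> R) (phi : 'I_k -> T -> R) : Prop :=
  [/\ forall i, phi i \in Lfun mu 2%:E,
      forall i j, inner2 (phi i) (phi j) = (i == j)%:R &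
      forall i x, distker (phi i) x = l i * phi i x] /\
  [/\ forall i, l i != 0,
      forall i j : 'I_k, (i < j)%N -> `|l j| < `|l i|,
      forall (i : 'I_k) (psi : T -> R) (nu : R), is_eigenfun psi nu ->
        (forall j : 'I_k, (j < i)%N -> inner2 psi (phi j) = 0) ->
        `|nu| <= `|l i| &
      forall i, 0 < inner2 (phi i) (fun x => `|phi i x|)].
End DistanceKernel.

Definition csqrt_scale {R : realType} (l v : R) : complex.complex R :=
  if 0 <= l then complex.Complex (Num.sqrt l * v) 0
  else complex.Complex 0 (Num.sqrt (- l) * v).

Definition DKE {R : realType} {T : Type} (k : nat) (l : 'I_k -> R)
  (phi : 'I_k -> T -> R) (x : T) : 'rV[complex.complex R]_k :=
  \row_i csqrt_scale (l i) (phi i x).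

(* Main.v *)
Require Import Defs.
From HB Require Import structures.
From mathcomp Require Import all_boot all_order all_algebra.
From mathcomp Require Import all_classical all_reals all_analysis.
From mathcomp Require complex.
Import Order.TTheory GRing.Theory Num.Theory.
Local Open Scope classical_set_scope.
Local Open Scope ring_scope.

Import HBNNSimple.


Section hcomp.
Context {R : realType} {d1 d2 : measure_display} {T1 : measurableType d1} {T2 : measurableType d2}.
Variables (phi : T1 -> T2) (mphi : measurable_fun setT phi) (h : {nnsfun T2 >-> R}).
Definition hcomp := fun x => h (phi x).
Let mh : measurable_fun setT hcomp.
Proof. exact: measurableT_comp. Qed.
HB.instance Definition _ := isMeasurableFun.Build _ _ _ _ hcomp mh.
Let fh : finite_set (range hcomp).
Proof. apply: (sub_finite_set _ (fimfunP h)) => _ [x _ <-]; by exists (phi x). Qed.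
HB.instance Definition _ := FiniteImage.Build _ _ hcomp fh.
Let nh : forall x, 0 <= hcomp x. Proof. by move=> x; rewrite /hcomp. Qed.
HB.instance Definition _ := isNonNegFun.Build _ _ hcomp nh.
Definition hcomp_nnsfun : {nnsfun T1 >-> R} := [nnsfun of hcomp].
End hcomp.

Arguments hcomp_nnsfun {R d1 d2 T1 T2 phi} mphi h.

Section transport.
Context {R : realType} {d1 d2 : measure_display} {T1 : measurableType d1} {T2 : measurableType d2}.
Variables (mu : {measure set T1 -> \bar R}) (nu : {measure set T2 -> \bar R}).
Variables (phi : T1 -> T2) (psi : T2 -> T1).
Hypotheses (mphi : measurable_fun setT phi) (mpsi : measurable_fun setT psi).
Hypotheses (phiK : cancel phi psi) (psiK : cancel psi phi).
Hypothesis hnu : forall A, measurable A -> nu A = mu (phi @^-1` A).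

Lemma sintegral_transport (h : {nnsfun T2 >-> R}) :
  sintegral nu h = sintegral mu (hcomp_nnsfun mphi h).
Proof.
rewrite /sintegral; apply: eq_fsbigr => r _; congr (_ * _)%E.
rewrite hnu //; exact: measurable_sfunP.
Qed.

Lemma sup_transport (g : T2 -> \bar R) :
  ereal_sup [set sintegral nu h | h in [set h : {nnsfun T2 >-> R} | forall y, ((h y)%:E <= g y)%E]]
  = ereal_sup [set sintegral mu h | h in [set h : {nnsfun T1 >-> R} | forall x, ((h x)%:E <= g (phi x))%E]].
Proof.
congr ereal_sup; apply/seteqP; split => _ [h /= hg <-].
  exists (hcomp_nnsfun mphi h); last by rewrite sintegral_transport.
  by move=> x /=; rewrite /hcomp hg.
exists (hcomp_nnsfun mpsi h).
  by move=> y /=; rewrite /hcomp; have := hg (psi y); rewrite psiK.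
rewrite sintegral_transport /sintegral; apply: eq_fsbigr => r _; congr (_ * _)%E.
by congr (mu _); apply/seteqP; split => x /=; rewrite /hcomp phiK.
Qed.

Lemma integral_transport (f : T2 -> \bar R) :
  (\int[nu]_(y in setT) f y = \int[mu]_(x in setT) f (phi x))%E.
Proof.
rewrite /integral !patch_setT; congr (_ - _)%E.
- rewrite (funepos_comp f phi); exact (sup_transport (f ^\+)%E).
- rewrite (funeneg_comp f phi); exact (sup_transport (f ^\-)%E).
Qed.

Lemma Rintegral_transport (f : T2 -> R) :
  Rintegral nu setT f = Rintegral mu setT (fun x => f (phi x)).
Proof. by rewrite /Rintegral integral_transport. Qed.


Lemma ae_transport (P : T2 -> Prop) :
  (\forall y \ae nu, P y) <-> (\forall x \ae mu, P (phi x)).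
Proof.
split.
  move=> [A [mA A0 PA]]; exists (phi @^-1` A); split.
  - by rewrite -[_ @^-1` _]setTI; exact: mphi.
  - by rewrite -hnu.
  - by move=> x /= Px; apply: PA.
move=> [A [mA A0 PA]]; exists (psi @^-1` A); split.
- by rewrite -[_ @^-1` _]setTI; exact: mpsi.
- rewrite hnu; last by rewrite -[_ @^-1` _]setTI; exact: mpsi.
  by rewrite -A0; congr (mu _); apply/seteqP; split => x /=; rewrite phiK.
- move=> y /= Py; apply: PA => /=; rewrite psiK; exact: Py.
Qed.

Lemma Lfun_transport (g : T2 -> R) :
  g \in Lfun nu 2%:E <-> (fun x => g (phi x)) \in Lfun mu 2%:E.
Proof.
have E : Lnorm nu 2%:E (EFin \o g) = Lnorm mu 2%:E (EFin \o (fun x => g (phi x))).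
  by rewrite unlock /= integral_transport.
have F : (g \in finLfun nu 2%:E) = ((fun x => g (phi x)) \in finLfun mu 2%:E).
  by rewrite /finLfun !unfold_in /= /in_set /finite_norm /= E.
rewrite !inE F; suff -> : (g \in mfun) = ((fun x => g (phi x)) \in mfun) by [].
rewrite /mfun !unfold_in /in_set /=; apply/asboolP/asboolP => mg.
  exact: measurableT_comp.
have -> : g = (fun x => g (phi x)) \o psi by apply: funext => y /=; rewrite psiK.
exact: measurableT_comp.
Qed.

Variables (dist1 : T1 -> T1 -> R) (dist2 : T2 -> T2 -> R).
Hypothesis hd : forall x y, dist2 (phi x) (phi y) = dist1 x y.

Lemma distker_transport (g : T2 -> R) x :
  distker dist2 nu g (phi x) = distker dist1 mu (fun y => g (phi y)) x.
Proof. by rewrite /distker Rintegral_transport; apply: eq_Rintegral => y _; rewrite hd. Qed.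

Lemma inner2_transport (g h : T2 -> R) :
  inner2 nu g h = inner2 mu (fun x => g (phi x)) (fun x => h (phi x)).
Proof. by rewrite /inner2 Rintegral_transport. Qed.

Lemma ae_eq_transport (g h : T2 -> R) :
  (g = h %[ae nu]) <-> ((fun x => g (phi x)) = (fun x => h (phi x)) %[ae mu]).
Proof. exact: (ae_transport (fun y => setT y -> g y = h y)). Qed.

Lemma eigen_transport (g : T2 -> R) l :
  is_eigenfun dist2 nu g l <-> is_eigenfun dist1 mu (fun x => g (phi x)) l.
Proof.
have E : distker dist1 mu (fun x => g (phi x)) = (fun x => distker dist2 nu g (phi x)).
  by apply: funext => x; rewrite distker_transport.
rewrite /is_eigenfun E; split => -[L N D]; split.
- by apply/Lfun_transport.
- by move=> H; apply: N; apply/ae_eq_transport.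
- by apply/(ae_eq_transport _ (fun y => l * g y)).
- by apply/Lfun_transport.
- by move=> H; apply: N; apply/(ae_eq_transport g (cst 0)).
- by apply/(ae_eq_transport _ (fun y => l * g y)).
Qed.


Lemma DK_transport k (l : 'I_k -> R) (ph : 'I_k -> T2 -> R) :
  DK_data dist2 nu l ph <-> DK_data dist1 mu l (fun i x => ph i (phi x)).
Proof.
rewrite /DK_data; split.
  move=> [[L O E] [N M X S]]; split; split => //.
  - by move=> i; apply/Lfun_transport.
  - by move=> i j; rewrite -inner2_transport.
  - by move=> i x; rewrite -distker_transport E.
  - move=> i p1 n1 ep orth.
    have ep' : is_eigenfun dist2 nu (fun y => p1 (psi y)) n1.
      by apply/eigen_transport; under eq_fun do rewrite phiK.
    apply: (X i _ _ ep') => j ji; rewrite inner2_transport.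
    by under eq_fun do rewrite phiK; apply: orth.
  - by move=> i; rewrite -(inner2_transport (ph i) (fun x => `|ph i x|)).
move=> [[L O E] [N M X S]]; split; split => //.
- by move=> i; apply/Lfun_transport.
- by move=> i j; rewrite inner2_transport.
- by move=> i u; rewrite -[u]psiK distker_transport E.
- move=> i p1 n1 ep orth.
  apply: (X i (fun x => p1 (phi x))); first by apply/eigen_transport.
  by move=> j ji; rewrite -inner2_transport; apply: orth.
- by move=> i; rewrite (inner2_transport (ph i) (fun x => `|ph i x|)).
Qed.

End transport.

Lemma isom_measurable {R : realType} {T1 T2 : pointedType} (d1 : T1 -> T1 -> R)
  (d2 : T2 -> T2 -> R) (f : T1 -> T2) :
  (forall x y, d2 (f x) (f y) = d1 x y) ->
  @measurable_fun _ _ (borelT d1) (borelT d2) setT f.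
Proof.
move=> hd; apply: (@measurability _ _ (borelT d1) (borelT d2) _ _ (dopen d2)) => //.
move=> _ [B oB <-]; apply: sub_sigma_algebra => x [_ Bfx].
have [e e0 sB] := oB _ Bfx; exists e => // y /= dxy; split => //.
by apply: sB => /=; rewrite hd.
Qed.

Section conc.
Context {R : realType} {X : pointedType} {Z : choiceType} (dX : X -> X -> R)
  (dZ : Z -> Z -> R) (iota : X -> Z).
Hypothesis mX : is_metric dX.
Hypothesis hiso : forall x y, dZ (iota x) (iota y) = dX x y.

Definition psiX (u : imgT iota) : X := proj1_sig (cid (asboolW (proj2_sig u))).

Lemma psiXE u : iota (psiX u) = proj1_sig u.
Proof. by rewrite /psiX; case: cid. Qed.

Lemma iota_inj : injective iota.
Proof.
move=> x y e; case: mX => _ H _ _; apply/H; rewrite -hiso e hiso; exact/H.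
Qed.

Lemma psiXK : cancel psiX (corestr iota).
Proof. move=> u; apply: val_inj => /=; exact: psiXE. Qed.

Lemma corestrK : cancel (corestr iota) psiX.
Proof. by move=> x; apply: iota_inj; rewrite psiXE. Qed.

Lemma hd1 x y : subdist iota dZ (corestr iota x) (corestr iota y) = dX x y.
Proof. exact: hiso. Qed.

Lemma hd2 u v : dX (psiX u) (psiX v) = subdist iota dZ u v.
Proof. by rewrite /subdist -hiso !psiXE. Qed.

End conc.

Theorem proposition5p7 (R : realType) (X : pointedType) (dX : X -> X -> R)
  (mu : {finite_measure set borelT dX -> \bar R})
  (Z : choiceType) (dZ : Z -> Z -> R) (iota : X -> Z)
  (nu : {measure set borelT (subdist iota dZ) -> \bar R}) :
  is_metric dX -> dcompact dX -> is_metric dZ ->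
  (forall x y, dZ (iota x) (iota y) = dX x y) ->
  (forall A, measurable A -> nu A = mu (corestr iota @^-1` A)) ->
  exists J : (borelT dX -> R) -> (borelT (subdist iota dZ) -> R),
    [/\ [/\ (* iota^* maps L^2(X, mu) to L^2(X', iota_# mu) ... *)
        forall f, f \in Lfun mu 2%:E -> J f \in Lfun nu 2%:E,
        (* ... is well defined on classes ... *)
        forall f g, f \in Lfun mu 2%:E -> g \in Lfun mu 2%:E ->
          (f = g %[ae mu]) -> (J f = J g %[ae nu]),
        (* ... injective on classes ... *)
        forall f g, f \in Lfun mu 2%:E -> g \in Lfun mu 2%:E ->
          (J f = J g %[ae nu]) -> (f = g %[ae mu]) &
        (* ... surjective on classes ... *)
        forall g, g \in Lfun nu 2%:E ->
          exists2 f, f \in Lfun mu 2%:E & (J f = g %[ae nu])],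
        (* D^{X'} o iota^* = iota^* o D^X *)
        forall f, f \in Lfun mu 2%:E ->
          (distker (bdist (subdist iota dZ)) nu (J f) = J (distker (bdist dX) mu f) %[ae nu]),
        (* eigenfunctions correspond *)
        forall f (l : R), f \in Lfun mu 2%:E ->
          (is_eigenfun (bdist dX) mu f l <-> is_eigenfun (bdist (subdist iota dZ)) nu (J f) l) &
        (* distance kernel embeddings have the same image *)
        forall k (l : 'I_k -> R),
          (forall phi, DK_data (bdist dX) mu l phi ->
             exists phi', [/\ DK_data (bdist (subdist iota dZ)) nu l phi',
                              forall i, (phi' i = J (phi i) %[ae nu]) &
                              range (DKE l phi) = range (DKE l phi')]) /\
          (forall phi', DK_data (bdist (subdist iota dZ)) nu l phi' ->
             exists phi, [/\ DK_data (bdist dX) mu l phi,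
                             forall i, (phi' i = J (phi i) %[ae nu]) &
                             range (DKE l phi) = range (DKE l phi')])].

Proof.
move=> mX cX mZ hiso hnu.
have mphi := @isom_measurable _ _ _ dX (subdist iota dZ) (corestr iota) (@hd1 _ _ _ dX dZ iota hiso).
have mpsi := @isom_measurable _ _ _ (subdist iota dZ) dX (psiX iota) (@hd2 _ _ _ dX dZ iota hiso).
have pK : cancel (psiX iota) (corestr iota) := psiXK iota.
have cK : cancel (corestr iota) (psiX iota) := @corestrK _ _ _ dX dZ iota mX hiso.
have hmu : forall A, measurable A -> mu A = nu (psiX iota @^-1` A).
  move=> A mA; rewrite hnu; last by rewrite -[_ @^-1` _]setTI; exact: mpsi.
  by congr (mu _); apply/seteqP; split => x /=; rewrite cK.
have hdA : forall x y, bdist (subdist iota dZ) (corestr iota x) (corestr iota y) = bdist dX x y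
  := @hd1 _ _ _ dX dZ iota hiso.
have hdB : forall u v, bdist dX (psiX iota u) (psiX iota v) = bdist (subdist iota dZ) u v
  := @hd2 _ _ _ dX dZ iota hiso.
exists (fun f u => f (psiX iota u)); split.
- split.
  + by move=> f /(Lfun_transport _ _ _ _ mpsi mphi pK cK hmu).
  + by move=> f g _ _ /(ae_eq_transport _ _ _ _ mpsi mphi pK cK hmu).
  + by move=> f g _ _ /(ae_eq_transport _ _ _ _ mpsi mphi pK cK hmu).
  + move=> g /(Lfun_transport _ _ _ _ mphi mpsi cK pK hnu) Lg.
    exists (fun x => g (corestr iota x)) => //; apply: aeW => u _ /=; by rewrite pK.
- move=> f _; apply: aeW => u _ /=.
  by rewrite -(distker_transport _ _ _ _ mpsi mphi pK cK hmu _ _ hdB).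
- move=> f l _; exact: (eigen_transport _ _ _ _ mpsi mphi pK cK hmu _ _ hdB).
- move=> k l; split.
  + move=> ph D; exists (fun i u => ph i (psiX iota u)); split.
    * by apply/(DK_transport _ _ _ _ mpsi mphi pK cK hmu _ _ hdB).
    * by move=> i; apply: aeW.
    * apply/seteqP; split => _ [x _ <-].
        by exists (corestr iota x) => //; apply/rowP => i; rewrite !mxE /= cK.
      by exists (psiX iota x).
  + move=> ph' D; exists (fun i x => ph' i (corestr iota x)); split.
    * by apply/(DK_transport _ _ _ _ mphi mpsi cK pK hnu _ _ hdA).
    * by move=> i; apply: aeW => u _ /=; rewrite pK.
    * apply/seteqP; split => _ [x _ <-].
        by exists (corestr iota x).
      by exists (psiX iota x) => //; apply/rowP => i; rewrite !mxE /= pK.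
Qed.
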